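(* Let $1/2<\delta<1$, let $P\subset\mathbb{R}^1$ be a finite point set containing the source $s$ located at $0$, and let $I\subset\mathbb{R}^1$ be an interval of length $\Delta_1$ at distance $\Delta_2$ from the source, that is, $I=[\Delta_2,\Delta_2+\Delta_1]$ or $I=[-\Delta_1-\Delta_2,-\Delta_2]$, for some $\Delta_2>0$. Let $P_{\mathrm{cheap}}(I)$ be the set of all cheap points of $P$ that are in $I$ and whose successor lies in $I$ as well. Then $\sum_{p\in P_{\mathrm{cheap}}(I)}\rho_{\mathrm{st}}(p)^2\le\delta(\Delta_1+\Delta_2)\Delta_1$.
   Context: Points of $P$ left of $s$ are $\ell_1,\ell_2,\dots$ and right of $s$ are $r_1,r_2,\dots$, numbered by increasing distance from $s$. The successor $\mathrm{suc}(p)$ of $r_i$ is $r_{i+1}$ and of $\ell_i$ is $\ell_{i+1}$; $s$ has successors $r_1,\ell_1$; the farthest point on each side (extreme) has no successor ($\mathrm{nil}$). The standard range $\rho_{\mathrm{st}}(p)$ of $p\ne s$ is $|p\,\mathrm{suc}(p)|$, or $0$ if $p$ is extreme. A point $p\ne s$ is expensive if $\mathrm{suc}(p)\ne\mathrm{nil}$ and $|p\,\mathrm{suc}(p)|>\delta\cdot|s\,\mathrm{suc}(p)|$, and cheap otherwise; $s$ is always expensive. *)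

(* Defs.v *)
From HB Require Import structures.
From mathcomp Require Import all_boot all_order all_algebra.
Set Implicit Arguments. Unset Strict Implicit. Unset Printing Implicit Defensive.
Import Order.TTheory GRing.Theory Num.Theory.
Local Open Scope ring_scope.

Section Defs.
Variable R : realFieldType.

(* Successor of a point p <> s (s is at 0) in the finite point set P:
   for p > 0 the nearest point of P to the right of p (r_i -> r_(i+1)),
   for p < 0 the nearest point of P to the left of p (l_i -> l_(i+1));
   None (nil) if p is extreme on its side.  The source s = 0 (which has two
   successors) is never passed to [suc] in a meaningful way: all uses below
   exclude p = 0 explicitly. *)
Definition suc (P : seq R) (p : R) : option R :=
  if 0 < p then
    match [seq q <- P | p < q] with
    | [::] => None
    | q :: C => Some (foldr Num.min q C)
    end
  else
    match [seq q <- P | q < p] with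
    | [::] => None
    | q :: C => Some (foldr Num.max q C)
    end.

Definition rho_st (P : seq R) (p : R) : R :=
  match suc P p with Some q => `|p - q| | None => 0 end.

Definition expensive (delta : R) (P : seq R) (p : R) : bool :=
  (p == 0) ||
  match suc P p with Some q => delta * `|0 - q| < `|p - q| | None => false end.

Definition cheap (delta : R) (P : seq R) (p : R) : bool := ~~ expensive delta P p.

Definition in_itv (lo hi x : R) : bool := (lo <= x) && (x <= hi).

Definition in_Pcheap (delta : R) (P : seq R) (lo hi p : R) : bool :=
  [&& cheap delta P p, in_itv lo hi p &
      match suc P p with Some q => in_itv lo hi q | None => false end].

End Defs.

(* Main.v *)
Require Import Defs.
From HB Require Import structures.
From mathcomp Require Import all_boot all_order all_algebra.
From mathcomp Require Import lra.
Import Order.TTheory GRing.Theory Num.Theory.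
Local Open Scope ring_scope.

Section Aux.
Variable R : realFieldType.

Lemma exists_max (a : R -> R) (s : seq R) : s != [::] ->
  exists2 m, m \in s & forall y, y \in s -> a y <= a m.
Proof.
elim: s => [//|x t IH] _.
case: t IH => [|z t] IH.
  by exists x => [|y]; rewrite ?mem_seq1 ?inE // => /eqP ->.
have [m Hm Hmax] := IH isT.
case: (leP (a x) (a m)) => H.
  exists m; first by rewrite inE Hm orbT.
  by move=> y; rewrite inE => /orP [/eqP ->|/Hmax].
exists x; first by rewrite inE eqxx.
move=> y; rewrite inE => /orP [/eqP ->//|/Hmax Hy].
by apply: (le_trans Hy); apply: ltW.
Qed.

Lemma sum_intervals (a b : R -> R) (s : seq R) lo hi :
  uniq s -> lo <= hi ->
  (forall x, x \in s -> [/\ lo <= a x, a x < b x & b x <= hi]) ->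
  (forall x y, x \in s -> y \in s -> x != y -> (b x <= a y) || (b y <= a x)) ->
  \sum_(x <- s) (b x - a x) <= hi - lo.
Proof.
move Hn: (size s) => n.
elim: n s hi Hn => [|n IH] s hi Hn Hu Hlh Hs Hp.
  by move/size0nil: Hn => ->; rewrite big_nil subr_ge0.
have Hne : s != [::] by case: s Hn {Hu Hs Hp}.
have [m Hm Hmax] := @exists_max a s Hne.
rewrite (perm_big _ (perm_to_rem Hm)) big_cons /=.
have [Hlm Hab Hbh] := Hs m Hm.
have Hrem : forall x, x \in rem m s -> x != m /\ x \in s.
  by move=> x; rewrite (mem_rem_uniq _ Hu) inE => /andP [].
have := IH (rem m s) (a m).
rewrite size_rem // Hn /= => /(_ erefl (rem_uniq _ Hu) Hlm).
have H1 : forall x, x \in rem m s -> [/\ lo <= a x, a x < b x & b x <= a m].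
  move=> x /Hrem [Hxm Hx]; have [H1 H2 H3] := Hs x Hx; split => //.
  have /orP [//|Hc] := Hp x m Hx Hm Hxm.
  have := Hmax x Hx; lra.
have H2 : forall x y, x \in rem m s -> y \in rem m s -> x != y ->
    (b x <= a y) || (b y <= a x).
  by move=> x y /Hrem [_ Hx] /Hrem [_ Hy]; apply: Hp.
move=> /(_ H1 H2); lra.
Qed.

Lemma foldr_min_mem (q : R) C : foldr Num.min q C \in q :: C.
Proof.
elim: C => [|c C IH] /=; first by rewrite inE.
rewrite /Num.min; case: ifP => _; first by rewrite !inE eqxx orbT.
move: IH; rewrite !inE => /orP [->//|->]; by rewrite !orbT.
Qed.

Lemma foldr_min_le (q : R) C y : y \in q :: C -> foldr Num.min q C <= y.
Proof.
elim: C => [|c C IH] /=; first by rewrite inE => /eqP ->.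
rewrite !inE => Hy.
have [->|Hyc] := eqVneq y c; first by rewrite ge_min lexx.
rewrite ge_min IH ?orbT //; rewrite inE.
by move: Hy; rewrite (negbTE Hyc).
Qed.

Lemma foldr_max_mem (q : R) C : foldr Num.max q C \in q :: C.
Proof.
elim: C => [|c C IH] /=; first by rewrite inE.
rewrite /Num.max; case: ifP => _; last by rewrite !inE eqxx orbT.
move: IH; rewrite !inE => /orP [->//|->]; by rewrite !orbT.
Qed.

Lemma foldr_max_le (q : R) C y : y \in q :: C -> y <= foldr Num.max q C.
Proof.
elim: C => [|c C IH] /=; first by rewrite inE => /eqP ->.
rewrite !inE => Hy.
have [->|Hyc] := eqVneq y c; first by rewrite le_max lexx.
rewrite le_max IH ?orbT //; rewrite inE.
by move: Hy; rewrite (negbTE Hyc).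
Qed.

Lemma suc_pos (P : seq R) (p q : R) : 0 < p -> suc P p = Some q ->
  [/\ q \in P, p < q & forall y, y \in P -> p < y -> q <= y].
Proof.
rewrite /suc => Hp; rewrite Hp.
case E: [seq _ <- P | _] => [//|x C] [<-].
have memf : forall z, (z \in x :: C) = (z \in P) && (p < z).
  by move=> z; rewrite -E mem_filter andbC.
have := foldr_min_mem x C; rewrite memf; case/andP => H1 H2.
split => // y Hy Hpy; apply: foldr_min_le; by rewrite memf Hy.
Qed.

Lemma suc_neg (P : seq R) (p q : R) : ~~ (0 < p) -> suc P p = Some q ->
  [/\ q \in P, q < p & forall y, y \in P -> y < p -> y <= q].
Proof.
rewrite /suc => Hp; rewrite (negbTE Hp).
case E: [seq _ <- P | _] => [//|x C] [<-].
have memf : forall z, (z \in x :: C) = (z \in P) && (z < p).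
  by move=> z; rewrite -E mem_filter andbC.
have := foldr_max_mem x C; rewrite memf; case/andP => H1 H2.
split => // y Hy Hpy; apply: foldr_max_le; by rewrite memf Hy.
Qed.

End Aux.
Arguments suc_pos {R P p q}.
Arguments suc_neg {R P p q}.

Theorem lemma11 (R : realFieldType) (delta : R) (P : seq R)
    (Delta1 Delta2 lo hi : R) :
  2^-1 < delta -> delta < 1 ->
  uniq P -> 0 \in P ->
  0 <= Delta1 -> 0 < Delta2 ->
  ((lo = Delta2 /\ hi = Delta2 + Delta1) \/
   (lo = - Delta1 - Delta2 /\ hi = - Delta2)) ->
  \sum_(p <- P | in_Pcheap delta P lo hi p) rho_st P p ^+ 2
    <= delta * (Delta1 + Delta2) * Delta1.
Proof.
move=> Hd1 Hd2 HuP H0P HD1 HD2 Hlohi.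
have Hdp : 0 < delta.
  apply: lt_trans Hd1; by rewrite invr_gt0.
rewrite -big_filter.
set s := [seq _ <- P | _].
have Hus : uniq s by apply: filter_uniq.
have Hsel : forall p, p \in s -> [/\ p \in P, Defs.in_itv lo hi p &
   exists2 q, suc P p = Some q & Defs.in_itv lo hi q /\ `|p - q| <= delta * `|0 - q| ].
  move=> p; rewrite mem_filter /in_Pcheap /cheap /expensive.
  case/andP => /and3P [Hc Hi Hm] Hp; move: Hm Hc; rewrite /=.
  case E: (suc P p) => [q|//] Hq Hc.
  split => //; exists q => //; split => //.
  by move: Hc; rewrite negb_or => /andP [_]; rewrite leNgt.
pose g p := odflt p (suc P p).
case: Hlohi => [[Elo Ehi]|[Elo Ehi]]; subst lo hi.
-
  have Hpos : forall p, p \in s -> [/\ Delta2 <= p, p < g p, g p <= Delta2 + Delta1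
      & rho_st P p ^+ 2 <= delta * (Delta1 + Delta2) * (g p - p)].
    move=> p /Hsel [HpP /andP [Hlp Hph] [q Hs [/andP [Hlq Hqh] Hc]]].
    have Hp0 : 0 < p by apply: lt_le_trans HD2 Hlp.
    have [_ Hpq _] := suc_pos Hp0 Hs.
    rewrite /g /rho_st Hs /=.
    rewrite ltr0_norm ?subr_lt0 // sub0r normrN gtr0_norm in Hc *; last first.
      by apply: lt_trans Hpq.
    split => //.
    have A : 0 <= (delta * q - (q - p)) * (q - p).
      apply: mulr_ge0; lra.
    have B : 0 <= delta * (q - p) * (Delta1 + Delta2 - q).
      apply: mulr_ge0; [apply: mulr_ge0|]; lra.
    rewrite expr2; nra.
  apply: (@le_trans _ _ (\sum_(p <- s) delta * (Delta1 + Delta2) * (g p - p))).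
    rewrite big_seq [X in _ <= X]big_seq; apply: ler_sum => p Hp; by case: (Hpos p Hp).
    rewrite -mulr_sumr; apply: ler_wpM2l.
      apply: mulr_ge0; lra.
    have := @sum_intervals R id g s Delta2 (Delta2 + Delta1) Hus.
    have -> : Delta2 + Delta1 - Delta2 = Delta1 by lra.
    apply; first lra.
      by move=> x /Hpos [].
    move=> x y Hx Hy Hxy.
    have [Hx1 Hx2 Hx3 _] := Hpos x Hx; have [Hy1 Hy2 Hy3 _] := Hpos y Hy.
    move: (Hsel x Hx) (Hsel y Hy) => [HxP _ [qx Ex _]] [HyP _ [qy Ey _]].
    have Hx0 : 0 < x by apply: lt_le_trans HD2 Hx1.
    have Hy0 : 0 < y by apply: lt_le_trans HD2 Hy1.
    have [_ _ Mx] := suc_pos Hx0 Ex; have [_ _ My] := suc_pos Hy0 Ey.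
    rewrite /g Ex Ey /=.
    case: (ltgtP x y) Hxy => // Hl _.
      by rewrite Mx.
    by rewrite My ?orbT.
-
  have Hneg : forall p, p \in s -> [/\ - Delta1 - Delta2 <= g p, g p < p, p <= - Delta2
      & rho_st P p ^+ 2 <= delta * (Delta1 + Delta2) * (p - g p)].
    move=> p /Hsel [HpP /andP [Hlp Hph] [q Hs [/andP [Hlq Hqh] Hc]]].
    have Hp0 : ~~ (0 < p) by rewrite -leNgt; lra.
    have [_ Hpq _] := suc_neg Hp0 Hs.
    rewrite /g /rho_st Hs /=.
    rewrite gtr0_norm ?subr_gt0 // sub0r normrN ltr0_norm in Hc *; last first.
      lra.
    split => //.
    have A : 0 <= (delta * (- q) - (p - q)) * (p - q).
      apply: mulr_ge0; lra.
    have B : 0 <= delta * (p - q) * (Delta1 + Delta2 + q).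
      apply: mulr_ge0; [apply: mulr_ge0|]; lra.
    rewrite expr2; nra.
  apply: (@le_trans _ _ (\sum_(p <- s) delta * (Delta1 + Delta2) * (p - g p))).
    rewrite big_seq [X in _ <= X]big_seq; apply: ler_sum => p Hp; by case: (Hneg p Hp).
    rewrite -mulr_sumr; apply: ler_wpM2l.
      apply: mulr_ge0; lra.
    have := @sum_intervals R g id s (- Delta1 - Delta2) (- Delta2) Hus.
    have -> : - Delta2 - (- Delta1 - Delta2) = Delta1 by lra.
    apply; first lra.
      by move=> x /Hneg [].
    move=> x y Hx Hy Hxy.
    have [Hx1 Hx2 Hx3 _] := Hneg x Hx; have [Hy1 Hy2 Hy3 _] := Hneg y Hy.
    move: (Hsel x Hx) (Hsel y Hy) => [HxP _ [qx Ex _]] [HyP _ [qy Ey _]].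
    have Hx0 : ~~ (0 < x) by rewrite -leNgt; lra.
    have Hy0 : ~~ (0 < y) by rewrite -leNgt; lra.
    have [_ _ Mx] := suc_neg Hx0 Ex; have [_ _ My] := suc_neg Hy0 Ey.
    rewrite /g Ex Ey /=.
    case: (ltgtP x y) Hxy => // Hl _.
      by rewrite (My x HxP Hl).
    by rewrite (Mx y HyP Hl) orbT.
Qed.
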